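(* Let $d\ge1$ and $n>1$ be integers with prime factorization $n=p_1^{\alpha_1}\cdots p_s^{\alpha_s}$, and put $t=\prod_{i=1}^s p_i^{\alpha_i+\lfloor\log_{p_i} d\rfloor}$. Then for every (closed) simplex $\Delta\subset\mathbb{R}^d$ of any dimension whose vertices lie in $\mathbb{Z}^d$, the number of points of $\mathbb{Z}^d$ in $t\Delta$ is congruent to $1$ modulo $n$.
   Context: For a set $X\subseteq\mathbb{R}^d$ and $t>0$, $tX=\{tx : x\in X\}$ denotes the image of $X$ under the homothety with center at the origin and ratio $t$. $\lfloor x\rfloor$ denotes the integer part of $x$. *)

(* Defs.v *)
From HB Require Import structures.
From mathcomp Require Import all_boot all_order all_algebra.
Set Implicit Arguments. Unset Strict Implicit. Unset Printing Implicit Defensive.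
Import Order.TTheory GRing.Theory Num.Theory.

Definition tfactor (n d : nat) : nat :=
  \prod_(p <- primes n) p ^ (logn p n + trunc_log p d).

Local Open Scope ring_scope.

(* Vertices of the simplex = rows of V (k+1 integer points of Z^d), viewed in R^d. *)
Definition vertR (R : realFieldType) (d k : nat) (V : 'M[int]_(k.+1, d)) : 'M[R]_(k.+1, d) :=
  map_mx (fun z : int => z%:~R) V.

(* affinely independent vertices: the homogenised vectors (v_i, 1) are linearly independent *)
Definition affinely_independent (R : realFieldType) (d k : nat) (V : 'M[int]_(k.+1, d)) : bool :=
  row_free (row_mx (vertR R V) (const_mx 1 : 'cV[R]_(k.+1))).

Definition in_dilated_simplex (R : realFieldType) (d k : nat) (t : nat)
    (V : 'M[int]_(k.+1, d)) (x : 'rV[int]_d) : Prop :=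
  exists lam : 'I_k.+1 -> R,
    (forall i, 0 <= lam i) /\ \sum_i lam i = 1 /\
    map_mx (fun z : int => z%:~R) x = t%:R *: \sum_i (lam i *: row i (vertR R V)).

(* Main.v *)
Require Import Defs.
From HB Require Import structures.
From mathcomp Require Import all_boot all_order all_algebra.
From Stdlib Require Import ClassicalEpsilon.
Import Order.TTheory GRing.Theory Num.Theory.
Set Implicit Arguments. Unset Strict Implicit. Unset Printing Implicit Defensive.
Lemma dvdn_from_log n m : 0 < n ->
  (forall p, p \in primes n -> p ^ logn p n %| m) -> n %| m.
Proof.
move=> n0 H; have [->|m0] := posnP m; first exact: dvdn0.
have g0 : 0 < gcdn n m by rewrite gcdn_gt0 n0.
suff <- : gcdn n m = n by exact: dvdn_gcdr.
apply: eqn_from_log => // p; rewrite logn_gcd //.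
case pn: (p \in primes n).
  have pp : prime p by move: pn; rewrite mem_primes => /andP[].
  by move: (H p pn); rewrite pfactor_dvdn // => le; apply/minn_idPl.
by have := negbT pn; rewrite -logn_gt0 -eqn0Ngt => /eqP ->; rewrite min0n.
Qed.

Lemma tf_dvd n d p : p \in primes n ->
  p ^ (logn p n + trunc_log p d) %| tfactor n d.
Proof. by move=> pn; rewrite /tfactor (big_rem p) //= dvdn_mulr. Qed.

Lemma tf_gt0 n d : 0 < tfactor n d.
Proof.
rewrite /tfactor big_seq; apply: prodn_cond_gt0 => p.
by rewrite mem_primes => /and3P[pp _ _]; rewrite expn_gt0 prime_gt0.
Qed.

Lemma tf_gt n d : 1 < n -> d < tfactor n d.
Proof.
move=> n1; set p := pdiv n.
have pp : prime p by exact: pdiv_prime.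
have pn : p \in primes n by rewrite mem_primes pp pdiv_dvd andbT ltnW.
have p1 : 1 < p by exact: prime_gt1.
clearbody p.
apply: (leq_trans (trunc_log_ltn d p1)).
apply: (leq_trans _ (dvdn_leq (tf_gt0 n d) (@tf_dvd n d p pn))).
apply: leq_pexp2l; first exact: ltnW.
by rewrite -addn1 addnC leq_add2r logn_gt0.
Qed.

Lemma binC_dvd n d i : 1 < n -> 0 < i <= d -> n %| 'C(tfactor n d, i).
Proof.
move=> n1 /andP[i0 id]; apply: dvdn_from_log; first exact: ltnW.
move=> p pn; set t := tfactor n d.
have pp : prime p by move: pn; rewrite mem_primes => /andP[].
have p1 : 1 < p by exact: prime_gt1.
have it : i <= t by apply: (leq_trans id); apply: ltnW; apply: tf_gt.
have C0 : 0 < 'C(t, i) by rewrite bin_gt0.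
have H : p ^ (logn p n + trunc_log p d) %| i * 'C(t, i).
  case: i i0 id it C0 => // j _ _ _ _.
  by rewrite -mul_bin_diag dvdn_mulr // tf_dvd.
rewrite pfactor_dvdn // in H; last by rewrite muln_gt0 i0.
rewrite lognM // in H.
have Li : logn p i <= trunc_log p d.
  apply: trunc_log_max => //; apply: leq_trans id.
  by apply: dvdn_leq => //; apply: pfactor_dvdnn.
rewrite pfactor_dvdn //.
rewrite -(leq_add2r (trunc_log p d)); apply: (leq_trans H).
by rewrite addnC leq_add2l.
Qed.

Lemma binT n d k j : 1 < n -> k <= d -> j <= k ->
  'C(tfactor n d + j, k) = (j == k) %[mod n].
Proof.
move=> n1 kd jk; rewrite -binomial.Vandermonde big_ord_recl bin0 mul1n subn0.
have /dvdnP[q ->] : n %| \sum_(i < k) 'C(tfactor n d, bump 0 i) * 'C(j, k - bump 0 i).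
  apply: dvdn_sum => i _; apply: dvdn_mulr; apply: binC_dvd => //.
  by rewrite /bump /= add1n /= (leq_trans _ kd).
rewrite addnC modnMDl.
case: (ltngtP j k) jk => // [jk _|-> _]; last by rewrite binn.
by rewrite bin_small.
Qed.
Lemma uniq_flatten_map (S T : eqType) (s : seq S) (g : S -> seq T) :
  uniq s -> (forall x, x \in s -> uniq (g x)) ->
  (forall x y z, x \in s -> y \in s -> z \in g x -> z \in g y -> x = y) ->
  uniq (flatten (map g s)).
Proof.
elim: s => //= x s IH /andP[xs us] Hu Hd.
rewrite cat_uniq Hu ?mem_head //= IH //; last first.
- by move=> u v z us' vs'; apply: Hd; rewrite inE ?us' ?vs' orbT.
- by move=> u us'; apply: Hu; rewrite inE us' orbT.
rewrite andbT; apply/hasP => -[z /flatten_mapP[y ys zy] zx].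
have xy := Hd x y z (mem_head _ _) _ zx zy.
by move: xs; rewrite xy ?ys // inE ys orbT.
Qed.

Lemma size_flatten_map (S T : Type) (s : seq S) (g : S -> seq T) :
  size (flatten (map g s)) = sumn (map (fun x => size (g x)) s).
Proof. by elim: s => //= x s IH; rewrite size_cat IH. Qed.

Fixpoint comps (k m : nat) : seq (seq nat) :=
  match k with
  | 0 => [:: [:: m]]
  | k'.+1 => flatten [seq [seq a :: c | c <- comps k' (m - a)] | a <- iota 0 m.+1]
  end.

Lemma compsS k m : comps k.+1 m =
  flatten [seq [seq a :: c | c <- comps k (m - a)] | a <- iota 0 m.+1].
Proof. by []. Qed.

Lemma mem_comps k m c : (c \in comps k m) = (size c == k.+1) && (sumn c == m).
Proof.
elim: k m c => [|k IH] m c.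
  rewrite /= inE; case: c => [|x [|y c]] //=; first by rewrite addn0 eqseq_cons andbT.
  by rewrite eqseq_cons /= andbF.
rewrite compsS.
apply/flatten_mapP/idP.
  move=> [a]; rewrite mem_iota add0n ltnS => /andP[_ am] /mapP[c' c'in ->].
  move: c'in; rewrite IH => /andP[/eqP sz /eqP sm] /=.
  by rewrite sz sm subnKC // !eqxx.
case: c => [|a c'] //; rewrite [size _]/= [sumn _]/= => /andP[sz /eqP sm].
exists a; first by rewrite mem_iota add0n ltnS leq0n -sm leq_addr.
apply/mapP; exists c' => //; rewrite IH -sm addKn eqxx andbT; exact: sz.
Qed.

Lemma uniq_comps k m : uniq (comps k m).
Proof.
elim: k m => [|k IH] m //.
rewrite compsS; apply: uniq_flatten_map; first exact: iota_uniq.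
  by move=> a _; rewrite map_inj_uniq // => x y [].
by move=> a b z _ _ /mapP[c _ ->] /mapP[c' _ [->]].
Qed.

Lemma hockey k m : \sum_(a < m.+1) 'C(m - a + k, k) = 'C(m + k.+1, k.+1).
Proof.
elim: m => [|m IH]; first by rewrite big_ord_recl big_ord0 addn0 !binn.
rewrite big_ord_recl /= subn0.
under eq_bigr => i _ do rewrite /bump /= add1n subSS.
have e : m + k.+1 = m.+1 + k by rewrite addnS.
by rewrite IH [in RHS]addSn binS e addnC.
Qed.

Lemma size_comps k m : size (comps k m) = 'C(m + k, k).
Proof.
elim: k m => [|k IH] m; first by rewrite /= bin0.
rewrite compsS size_flatten_map.
under eq_map => a do rewrite size_map IH.
by rewrite -hockey sumnE big_map -(big_mkord xpredT (fun a => 'C(m - a + k, k))) /index_iota subn0.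
Qed.

Local Open Scope ring_scope.
Definition iR (R : realFieldType) m n (A : 'M[int]_(m, n)) : 'M[R]_(m, n) :=
  map_mx (fun z : int => z%:~R) A.

Definition Wm d k (V : 'M[int]_(k.+1, d)) : 'M[int]_(k.+1, d + 1) :=
  row_mx V (const_mx 1).

Lemma iR_W (R : realFieldType) d k (V : 'M[int]_(k.+1, d)) :
  iR R (Wm V) = row_mx (vertR R V) (const_mx 1).
Proof. by rewrite /iR /Wm map_row_mx map_const_mx. Qed.

Lemma iR_inj (R : realFieldType) m n : injective (@iR R m n).
Proof.
move=> A B /matrixP e; apply/matrixP => i j.
by have := e i j; rewrite !mxE => /intr_inj.
Qed.

Lemma iRM (R : realFieldType) m n p (A : 'M[int]_(m, n)) (B : 'M[int]_(n, p)) :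
  iR R (A *m B) = iR R A *m iR R B.
Proof. by rewrite /iR map_mxM. Qed.

Lemma iRD (R : realFieldType) m n (A B : 'M[int]_(m, n)) :
  iR R (A + B) = iR R A + iR R B.
Proof. by rewrite /iR map_mxD. Qed.

Lemma iRB (R : realFieldType) m n (A B : 'M[int]_(m, n)) :
  iR R (A - B) = iR R A - iR R B.
Proof. by rewrite /iR map_mxB. Qed.

Lemma mul_row_l (S : pzRingType) m n p q (u : 'M[S]_(m, n)) (A : 'M_(n, p)) (C : 'M_(n, q)) :
  lsubmx (u *m row_mx A C) = u *m A.
Proof. by rewrite mul_mx_row row_mxKl. Qed.

Lemma mul_row_r (S : pzRingType) n p (u : 'rV[S]_n) (A : 'M_(n, p)) :
  rsubmx (u *m row_mx A (const_mx 1 : 'cV_n)) 0 0 = \sum_i u 0 i.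
Proof.
rewrite mul_mx_row row_mxKr !mxE; apply: eq_bigr => i _.
by rewrite mxE mulr1.
Qed.

Fixpoint fl (R : realFieldType) (N : nat) (r : R) : nat :=
  match N with 0 => 0%N | N'.+1 => if N%:R <= r then N else fl N' r end.

Lemma fl_spec (R : realFieldType) N (r : R) : 0 <= r -> r < N.+1%:R ->
  (fl N r)%:R <= r < (fl N r).+1%:R.
Proof.
move=> r0; elim: N => [|N IH] /= rN; first by rewrite r0.
case: ifP => [->//|/negbT]; rewrite -ltNge => h; exact: IH.
Qed.

Lemma ipart_uniq (R : realFieldType) (a b : nat) (x y : R) :
  0 <= x < 1 -> 0 <= y < 1 -> a%:R + x = b%:R + y -> a = b.
Proof.
move=> /andP[x0 x1] /andP[y0 y1] e.
have h (a' b' : nat) (x' y' : R) : 0 <= x' -> y' < 1 ->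
    a'%:R + x' = b'%:R + y' -> (a' <= b')%N.
  move=> x0' y1' e'; rewrite -ltnS -(ltr_nat R).
  have ax : a'%:R <= a'%:R + x' :> R by rewrite lerDl.
  by apply: (le_lt_trans ax); rewrite e' -natr1 ltrD2l.
by apply/eqP; rewrite eqn_leq (h _ _ _ _ x0 y1 e) (h _ _ _ _ y0 x1 (esym e)).
Qed.
Definition pb (P : Prop) : bool := if excluded_middle_informative P then true else false.
Lemma pbP (P : Prop) : reflect P (pb P).
Proof. by rewrite /pb; case: excluded_middle_informative => h; constructor. Qed.

Lemma box (m B : nat) (P : 'rV[int]_m -> Prop) :
  (forall y, P y -> forall j, `|y 0 j| <= B%:Z) ->
  exists s : seq 'rV[int]_m, uniq s /\ forall y, y \in s <-> P y.
Proof.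
move=> HB.
pose bx := [seq (\row_j (((f j : nat)%:Z - B%:Z)) : 'rV[int]_m) | f : {ffun 'I_m -> 'I_(B + B)%N.+1} <- enum {ffun 'I_m -> 'I_(B + B)%N.+1}].
exists (undup [seq y <- bx | pb (P y)]); split; first exact: undup_uniq.
move=> y; rewrite mem_undup mem_filter; split; first by move=> /andP[/pbP].
move=> Py; apply/andP; split; first exact/pbP.
apply/mapP; exists [ffun j => inord (absz (y 0 j + B%:Z))]; first by rewrite mem_enum.
apply/matrixP => i j; rewrite !mxE ffunE (ord1 i).
have := HB y Py j; rewrite ler_norml => /andP[lo hi].
have ge0 : 0 <= y 0 j + B%:Z by rewrite -lerBlDr sub0r.
rewrite inordK; last by rewrite ltnS -lez_nat abszE ger0_norm // PoszD lerD2r.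
by rewrite abszE ger0_norm // addrK.
Qed.

Definition Pfund (R : realFieldType) d k (V : 'M[int]_(k.+1, d)) (y : 'rV[int]_(d + 1)) : Prop :=
  exists pi : 'rV[R]_k.+1, (forall i, 0 <= pi 0 i < 1) /\ iR R y = pi *m iR R (Wm V).

Lemma le_term_sum (R : realFieldType) (I : finType) (F : I -> R) i :
  (forall j, 0 <= F j) -> F i <= \sum_j F j.
Proof. by move=> h; rewrite (bigD1 i) //= ler_wpDr // sumr_ge0. Qed.

Lemma intr_nat (R : realFieldType) (n : nat) : (n%:Z)%:~R = n%:R :> R.
Proof. by rewrite -pmulrn. Qed.

Lemma iR_last (R : realFieldType) d k (V : 'M[int]_(k.+1, d)) (pi : 'rV[R]_k.+1)
  (y : 'rV[int]_(d + 1)) :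
  iR R y = pi *m iR R (Wm V) -> (rsubmx y 0 0)%:~R = \sum_i pi 0 i.
Proof.
move=> e; have := congr1 (fun M => rsubmx M 0 0) e.
by rewrite iR_W mul_row_r /iR -map_rsubmx mxE.
Qed.

Lemma Pheight (R : realFieldType) d k (V : 'M[int]_(k.+1, d)) (y : 'rV[int]_(d + 1)) :
  Pfund R V y -> exists h : nat,
    [/\ rsubmx y 0 0 = h%:Z, (h <= k)%N & (h = 0%N -> y = 0)].
Proof.
move=> [pi [hpi e]]; have el := iR_last e.
have s0 : 0 <= \sum_i pi 0 i by apply: sumr_ge0 => i _; case/andP: (hpi i).
have y0 : 0 <= rsubmx y 0 0 by rewrite -(ler0z R) el.
exists (absz (rsubmx y 0 0)); rewrite abszE ger0_norm //; split => //.
  rewrite -ltnS -(ltr_nat R) -intr_nat abszE ger0_norm // el.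
  have -> : k.+1%:R = \sum_(i < k.+1) (1 : R) by rewrite sumr_const card_ord.
  apply: ltr_sum; first by apply/hasP; exists ord0; rewrite ?mem_index_enum.
  by move=> i _; case/andP: (hpi i).
move=> h0; apply: (@iR_inj R); rewrite e.
have pi0 : pi = 0.
  apply/matrixP => i j; rewrite (ord1 i) mxE.
  apply: (psumr_eq0P (P := xpredT) (F := fun i => pi 0 i)) => //.
    by move=> l _; case/andP: (hpi l).
  by rewrite -el; move/eqP: h0; rewrite absz_eq0 => /eqP ->.
by rewrite pi0 mul0mx /iR map_mx0.
Qed.

Lemma PB (R : realFieldType) d k (V : 'M[int]_(k.+1, d)) (y : 'rV[int]_(d + 1)) :
  Pfund R V y -> forall j, `|y 0 j| <= (\sum_i \sum_j absz (Wm V i j))%N%:Z.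
Proof.
move=> [pi [hpi e]] j.
rewrite -(ler_int R) intr_norm intr_nat.
have -> : (y 0 j)%:~R = (iR R y) 0 j by rewrite mxE.
rewrite e mxE; apply: (le_trans (ler_norm_sum _ _ _)).
rewrite natr_sum; apply: ler_sum => i _.
have H := @le_term_sum R _ (fun j => (absz (Wm V i j))%:R : R) j (fun _ => ler0n _ _).
rewrite natr_sum; apply: (le_trans _ H).
rewrite normrM mxE -intr_norm -abszE intr_nat.
case/andP: (hpi i) => p0 p1; rewrite ger0_norm //.
by rewrite ler_piMl // ltW.
Qed.

Definition vec k (c : seq nat) : 'rV[int]_k.+1 := \row_i (nth 0%N c i)%:Z.

Lemma rsubmxD0 (m1 m2 : nat) (A B : 'M[int]_(1, m1 + m2.+1)) :
  rsubmx (A + B) 0 0 = rsubmx A 0 0 + rsubmx B 0 0.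
Proof. by rewrite !mxE. Qed.

Lemma lsubmxD (m1 m2 : nat) (A B : 'M[int]_(1, m1 + m2)) :
  lsubmx (A + B) = lsubmx A + lsubmx B.
Proof. by apply/matrixP => i j; rewrite !mxE. Qed.

Lemma last_vec d k (V : 'M[int]_(k.+1, d)) (c : seq nat) : size c = k.+1 ->
  rsubmx (vec k c *m Wm V) 0 0 = (sumn c)%:Z.
Proof.
move=> sz; rewrite /Wm mul_row_r; under eq_bigr do rewrite mxE.
rewrite sumnE (big_nth 0%N) sz big_mkord.
by rewrite (big_morph Posz PoszD (erefl (Posz 0))).
Qed.

Lemma iR_vec (R : realFieldType) k (c : seq nat) i : (iR R (vec k c)) 0 i = (nth 0%N c i)%:R.
Proof. by rewrite !mxE intr_nat. Qed.

Definition Fy d k (V : 'M[int]_(k.+1, d)) (y : 'rV[int]_(d + 1)) (c : seq nat) : 'rV[int]_d :=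
  lsubmx (y + vec k c *m Wm V).

Lemma INJ (R : realFieldType) d k (V : 'M[int]_(k.+1, d)) (hV : row_free (iR R (Wm V)))
  (t : int) y y' c c' :
  Pfund R V y -> Pfund R V y' -> size c = k.+1 -> size c' = k.+1 ->
  rsubmx y 0 0 + (sumn c)%:Z = t -> rsubmx y' 0 0 + (sumn c')%:Z = t ->
  Fy V y c = Fy V y' c' -> y = y' /\ c = c'.
Proof.
move=> [pi [hpi e]] [pi' [hpi' e']] sz sz' ht ht' eF.
have ez : y + vec k c *m Wm V = y' + vec k c' *m Wm V.
  rewrite -[LHS]hsubmxK -[RHS]hsubmxK; congr row_mx; first exact: eF.
  apply/matrixP => i j; rewrite !ord1.
  by rewrite !rsubmxD0 !last_vec // ht ht'.
have emu : pi + iR R (vec k c) = pi' + iR R (vec k c').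
  apply: (row_free_inj hV); rewrite !mulmxDl -e -e' -!iRM -!iRD; congr (iR R _).
  exact: ez.
have ec : c = c'.
  apply: (eq_from_nth (x0 := 0%N)); first by rewrite sz sz'.
  move=> i; rewrite sz => lt.
  have := congr1 (fun M : 'rV[R]_k.+1 => M 0 (Ordinal lt)) emu; rewrite !mxE !intr_nat /= => h.
  apply: (ipart_uniq (hpi (Ordinal lt)) (hpi' (Ordinal lt))).
  by rewrite addrC h addrC.
split => //; move: ez; rewrite ec; exact: addIr.
Qed.

Lemma FWD (R : realFieldType) d k (V : 'M[int]_(k.+1, d)) (t : nat) y c :
  (0 < t)%N -> Pfund R V y -> size c = k.+1 ->
  rsubmx y 0 0 + (sumn c)%:Z = t%:Z -> in_dilated_simplex R t V (Fy V y c).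
Proof.
move=> t0 [pi [hpi e]] sz ht.
pose mu := pi + iR R (vec k c).
have ez : iR R (y + vec k c *m Wm V) = mu *m iR R (Wm V).
  by rewrite iRD iRM e mulmxDl.
have hx : iR R (Fy V y c) = mu *m vertR R V.
  by rewrite /Fy /iR map_lsubmx -/(iR R _) ez iR_W mul_row_l.
have hs : \sum_i mu 0 i = t%:R.
  by rewrite -(iR_last ez) rsubmxD0 last_vec // ht intr_nat.
have tn0 : (t%:R : R) != 0 by rewrite pnatr_eq0 -lt0n.
exists (fun i => mu 0 i / t%:R); split; last split.
- move=> i; apply: divr_ge0 => //; rewrite !mxE.
  by apply: addr_ge0; [case/andP: (hpi i) | rewrite intr_nat ler0n].
- by rewrite -mulr_suml hs divff.
- change (iR R (Fy V y c) = t%:R *: \sum_i ((mu 0 i / t%:R) *: row i (vertR R V))).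
  rewrite hx mulmx_sum_row scaler_sumr; apply: eq_bigr => i _.
  by rewrite scalerA mulrC divfK.
Qed.

Lemma BWD (R : realFieldType) d k (V : 'M[int]_(k.+1, d)) (t : nat) x :
  (0 < t)%N -> in_dilated_simplex R t V x ->
  exists y c, [/\ Pfund R V y, size c = k.+1,
    rsubmx y 0 0 + (sumn c)%:Z = t%:Z & Fy V y c = x].
Proof.
move=> t0 [lam [l0 [l1 lx]]].
pose mu : 'rV[R]_k.+1 := \row_i (t%:R * lam i).
have mu0 i : 0 <= mu 0 i by rewrite mxE mulr_ge0.
have hs : \sum_i mu 0 i = t%:R.
  by under eq_bigr do rewrite mxE; rewrite -mulr_sumr l1 mulr1.
have hx : iR R x = mu *m vertR R V.
  rewrite [LHS]lx mulmx_sum_row scaler_sumr; apply: eq_bigr => i _.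
  by rewrite scalerA mxE.
have hle i : mu 0 i < t.+1%:R.
  apply: (le_lt_trans (y := t%:R)); last by rewrite ltr_nat.
  by rewrite -hs; apply: (@le_term_sum R _ (fun j => mu 0 j) i) => j; exact: mu0.
pose a i := fl t (mu 0 i).
have ha i : (a i)%:R <= mu 0 i < (a i).+1%:R by apply: fl_spec.
pose c := [seq a i | i <- enum 'I_k.+1].
have sz : size c = k.+1 by rewrite size_map size_enum_ord.
have hvec i : (iR R (vec k c)) 0 i = (a i)%:R.
  by rewrite iR_vec (nth_map ord0) ?size_enum_ord // nth_ord_enum.
pose y := row_mx x (const_mx t%:Z) - vec k c *m Wm V.
exists y, c; split => //.
- exists (mu - iR R (vec k c)); split.
    move=> i.
    have -> : (mu - iR R (vec k c)) 0 i = mu 0 i - (iR R (vec k c)) 0 i.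
      by rewrite !mxE.
    rewrite hvec.
    case/andP: (ha i) => h1 h2.
    by rewrite subr_ge0 h1 /= ltrBlDr addrC natr1.
  rewrite mulmxBl /y iRB iRM; congr (_ - _).
  rewrite iR_W mul_mx_row /iR map_row_mx map_const_mx; congr row_mx; first exact: hx.
  apply/matrixP => i j; rewrite !ord1 !mxE intr_nat -hs.
  by apply: eq_bigr => l _; rewrite !mxE mulr1.
- have -> : rsubmx y 0 0 = rsubmx (row_mx x (const_mx t%:Z : 'rV[int]_1)) 0 0
      - rsubmx (vec k c *m Wm V) 0 0 by rewrite /y !mxE.
  by rewrite last_vec // row_mxKr mxE subrK.
- by rewrite /Fy /y subrK row_mxKl.
Qed.

Local Close Scope ring_scope.

Lemma sumn_mod (T : eqType) (s : seq T) (f g : T -> nat) n :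
  (forall x, x \in s -> f x = g x %[mod n]) ->
  sumn (map f s) = sumn (map g s) %[mod n].
Proof.
elim: s => //= x s IH H.
rewrite -modnDm H ?mem_head // IH; last by move=> y ys; apply: H; rewrite inE ys orbT.
by rewrite modnDm.
Qed.

Theorem mainTheorem4 (d n : nat) (hd : (1 <= d)%N) (hn : (1 < n)%N)
    (R : realFieldType) (k : nat) (V : 'M[int]_(k.+1, d))
    (hV : affinely_independent R V) :
  exists s : seq 'rV[int]_d,
    uniq s /\
    (forall x : 'rV[int]_d, x \in s <-> in_dilated_simplex R (tfactor n d) V x) /\
    size s = 1 %[mod n].
Proof.
set t := tfactor n d.
have t0 : (0 < t)%N := tf_gt0 n d.
have dt : (d < t)%N := tf_gt d hn.
have hV' : row_free (iR R (Wm V)) by rewrite iR_W.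
have kd : (k <= d)%N.
  have := rank_leq_col (row_mx (vertR R V) (const_mx 1%R : 'cV[R]_k.+1)).
  by rewrite (eqP hV) addn1 ltnS.
have [Y [uY memY]] := box (@PB R d k V).
pose h (y : 'rV[int]_(d + 1)) := absz (rsubmx y 0%R 0%R).
have hY y : y \in Y ->
    [/\ rsubmx y 0%R 0%R = Posz (h y), (h y <= k)%N & (h y = 0%N -> y = 0%R)].
  move/memY => Py; have [h' [e1 e2 e3]] := Pheight Py.
  by rewrite /h e1 /=.
have ht y : y \in Y -> (h y <= t)%N.
  by move=> /hY[_ hk _]; apply: (leq_trans hk); apply: (leq_trans kd); apply: ltnW.
have hc y c : y \in Y -> c \in comps k (t - h y) ->
    size c = k.+1 /\ (rsubmx y 0%R 0%R + Posz (sumn c) = Posz t)%R.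
  move=> yY; rewrite mem_comps => /andP[/eqP sz /eqP sm]; split => //.
  by have [e1 _ _] := hY y yY; rewrite e1 sm -PoszD subnKC // ht.
pose s := flatten [seq [seq Fy V y c | c <- comps k (t - h y)] | y <- Y].
exists s; split; [|split].
- apply: uniq_flatten_map => //.
    move=> y yY; rewrite map_inj_in_uniq ?uniq_comps // => c c' cin c'in eF.
    have [sz e] := hc y c yY cin; have [sz' e'] := hc y c' yY c'in.
    have Py : Pfund R V y by apply/memY.
    by have [_ ->] := INJ hV' Py Py sz sz' e e' eF.
  move=> y y' z yY y'Y /mapP[c cin ->] /mapP[c' c'in eF].
  have [sz e] := hc y c yY cin; have [sz' e'] := hc y' c' y'Y c'in.
  have Py : Pfund R V y by apply/memY.
  have Py' : Pfund R V y' by apply/memY.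
  by have [-> _] := INJ hV' Py Py' sz sz' e e' eF.
- move=> x; split.
    move=> /flatten_mapP[y yY /mapP[c cin ->]].
    have [sz e] := hc y c yY cin.
    by apply: FWD => //; apply/memY.
  move=> /(BWD t0) [y [c [Py sz e <-]]].
  have yY : y \in Y by apply/memY.
  have [e1 _ _] := hY y yY.
  apply/flatten_mapP; exists y => //; apply/mapP; exists c => //.
  rewrite mem_comps sz eqxx /=.
  move: e; rewrite e1 -PoszD => -[<-]; by rewrite addKn.
- rewrite size_flatten_map.
  under eq_map => y do rewrite size_map size_comps.
  rewrite (@sumn_mod _ _ _ (fun y => nat_of_bool (y == 0%R))).
    rewrite sumn_count count_uniq_mem //.
    suff -> : (0%R : 'rV[int]_(d + 1)) \in Y by [].
    apply/memY; exists 0%R; split.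
      by move=> i; rewrite mxE lexx ltr01.
    by rewrite mul0mx /iR map_mx0.
  move=> y yY; have [e1 hk h0] := hY y yY.
  have -> : (t - h y + k = t + (k - h y))%N by rewrite addnBAC ?addnBA // ht.
  rewrite binT // ?leq_subr //.
  case: (eqVneq y 0%R) => [y0|yn0].
    by rewrite y0 /h mxE mxE subn0 eqxx.
  have hn0 : h y != 0%N by apply: contra_neq yn0 => /h0.
  suff -> : (k - h y == k) = false by [].
  apply/negbTE; rewrite neq_ltn; apply/orP; left.
  by rewrite ltn_subrL lt0n hn0 /= (leq_trans _ hk) // lt0n.
Qed.
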